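(* Let $(N_\mu)_{\mu\in\mathbb N}$ be positive integers with $N_{\mu+1}/N_\mu\to\infty$, and such that $\varepsilon_\mu:=\frac12\sqrt{N_\mu/N_{\mu+1}}$ is non-increasing. Define $\Delta:\mathbb N\times\mathbb N\to[0,\infty]$ by $$\Delta(n,m)=\inf\Big\{\sum_k\varepsilon_{\mu_k}:\ (\mu_k)\text{ a finite family of indices with } m\le\sum_kN_{\mu_k}\le n\Big\}$$ (infimum of the empty set $=+\infty$). Then $\Delta$ satisfies $\Delta(n+1,m)\le\Delta(n,m)\le\Delta(n,m+1)$ and $\Delta(n_1+n_2,m_1+m_2)\le\Delta(n_1,m_1)+\Delta(n_2,m_2)$, and $\Delta(N_\mu,N_\mu)\to0$ (so rate $1$ is attained along the sequence $(N_\mu,N_\mu)$). However, for $n_\mu=N_{\mu+1}-1$ and $m_\mu=\lceil\sqrt{N_\mu N_{\mu+1}}\rceil$ one has $m_\mu/n_\mu\to0$ while $\liminf_\mu\Delta(n_\mu,m_\mu)\ge\frac12$. *)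

(* Defs.v *)
From HB Require Import structures.
From mathcomp Require Import all_boot all_order all_algebra.
From mathcomp Require Import all_classical all_reals all_analysis.
Set Implicit Arguments. Unset Strict Implicit. Unset Printing Implicit Defensive.
Import Order.TTheory GRing.Theory Num.Theory.
Import numFieldNormedType.Exports.
Local Open Scope classical_set_scope.
Local Open Scope ring_scope.

Definition eps (R : realType) (N : nat -> nat) (mu : nat) : R :=
  2^-1 * Num.sqrt ((N mu)%:R / (N mu.+1)%:R).

(* A finite family of indices is represented by a list s : seq nat
   (repetitions allowed, order irrelevant for the sums). *)
Definition Delta (R : realType) (N : nat -> nat) (n m : nat) : \bar R :=
  ereal_inf [set ((\sum_(k <- s) eps R N k)%:E) | s in
             [set s : seq nat | (m <= \sum_(k <- s) N k <= n)%N]].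

Definition nseq_ (N : nat -> nat) (mu : nat) : nat := (N mu.+1 - 1)%N.

Definition mseq_ (R : realType) (N : nat -> nat) (mu : nat) : nat :=
  `|Num.ceil (Num.sqrt (((N mu * N mu.+1)%N)%:R : R))|%N.

(* Main.v *)
Require Import Defs.
From HB Require Import structures.
From mathcomp Require Import all_boot all_order all_algebra.
From mathcomp Require Import all_classical all_reals all_analysis.
From mathcomp Require Import ring lra zify.
Import Order.TTheory GRing.Theory Num.Theory.
Import numFieldNormedType.Exports.
Local Open Scope classical_set_scope.
Local Open Scope ring_scope.

Lemma eps_ge0 (R : realType) N mu : 0 <= eps R N mu.
Proof. by rewrite /eps mulr_ge0 // sqrtr_ge0. Qed.

Lemma sum_eps_ge0 (R : realType) N (s : seq nat) : 0 <= \sum_(k <- s) eps R N k.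
Proof. by apply: sumr_ge0 => k _; exact: eps_ge0. Qed.

Lemma Delta_le (R : realType) N n m (s : seq nat) :
  (m <= \sum_(k <- s) N k <= n)%N ->
  (Delta R N n m <= (\sum_(k <- s) eps R N k)%:E)%E.
Proof. by move=> h; apply: ereal_inf_lbound; exists s. Qed.

Lemma Delta_lb (R : realType) N n m (x : \bar R) :
  (forall s : seq nat, (m <= \sum_(k <- s) N k <= n)%N ->
     (x <= (\sum_(k <- s) eps R N k)%:E)%E) ->
  (x <= Delta R N n m)%E.
Proof. by move=> h; apply/ereal_infP => _ [s hs <-]; exact: h. Qed.

Lemma Delta_ge0 (R : realType) N n m : (0 <= Delta R N n m)%E.
Proof. by apply: Delta_lb => s _; rewrite lee_fin sum_eps_ge0. Qed.

Lemma Delta_mono (R : realType) N n m :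
  (Delta R N n.+1 m <= Delta R N n m)%E /\ (Delta R N n m <= Delta R N n m.+1)%E.
Proof.
split; apply: Delta_lb => s /andP[h1 h2]; apply: Delta_le; apply/andP; split => //.
- exact: leq_trans h2 _.
- exact: ltnW.
Qed.

Lemma Delta_subadd (R : realType) N n1 n2 m1 m2 :
  (Delta R N (n1 + n2) (m1 + m2) <= Delta R N n1 m1 + Delta R N n2 m2)%E.
Proof.
have [D1oo|D1fin] := eqVneq (Delta R N n1 m1) +oo%E.
  rewrite D1oo addye ?leey //; by apply: contraTneq (Delta_ge0 R N n2 m2) => ->.
have [D2oo|D2fin] := eqVneq (Delta R N n2 m2) +oo%E.
  rewrite D2oo addey ?leey //.
  by apply: contraTneq (Delta_ge0 R N n1 m1) => ->.
have f1 : Delta R N n1 m1 \is a fin_num by rewrite ge0_fin_numE ?Delta_ge0 // ltey.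
have f2 : Delta R N n2 m2 \is a fin_num by rewrite ge0_fin_numE ?Delta_ge0 // ltey.
rewrite -lee_subel_addr //; apply: Delta_lb => s1 /andP[a1 b1].
rewrite lee_subel_addr // addeC -lee_subel_addr //; apply: Delta_lb => s2 /andP[a2 b2].
rewrite lee_subel_addr // -EFinD -!big_cat /=; apply: Delta_le.
rewrite big_cat /=; apply/andP; split; rewrite addnC; exact: leq_add.
Qed.

Lemma ratio2 (R : realType) (N : nat -> nat)
  (Npos : forall mu, (0 < N mu)%N)
  (ratio_oo : (fun mu => (N mu.+1)%:R / (N mu)%:R : R) @ \oo --> +oo) :
  exists K0, forall mu, (K0 <= mu)%N -> (2 * N mu <= N mu.+1)%N.
Proof.
have [K0 _ HK] := cvgry_ge ratio_oo 2.
exists K0 => mu /HK /=.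
rewrite ler_pdivlMr ?ltr0n // -natrM ler_nat //.
Qed.

Lemma eps_cvg0 (R : realType) (N : nat -> nat)
  (Npos : forall mu, (0 < N mu)%N)
  (ratio_oo : (fun mu => (N mu.+1)%:R / (N mu)%:R : R) @ \oo --> +oo) :
  eps R N @ \oo --> 0.
Proof.
apply/cvgr0Pnorm_le => e e0.
have e20 : 0 < (2 * e) ^+ 2 by rewrite exprn_gt0 // mulr_gt0.
near=> mu.
have H : ((2 * e) ^+ 2)^-1 <= (N mu.+1)%:R / (N mu)%:R :> R.
  by near: mu; exact: cvgry_ge ratio_oo _.
have Hs : Num.sqrt ((N mu)%:R / (N mu.+1)%:R) <= 2 * e.
  rewrite -(ger0_norm (ltW (mulr_gt0 (ltr0Sn _ 1) e0) : 0 <= 2 * e)) -sqrtr_sqr.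
  rewrite ler_sqrt; last exact: ltW.
  rewrite -invf_div -[(2 * e) ^+ 2]invrK lef_pV2 ?posrE ?invr_gt0 //.
  by rewrite divr_gt0 // ltr0n.
rewrite ger0_norm ?eps_ge0 // /eps.
have := sqrtr_ge0 ((N mu)%:R / (N mu.+1)%:R : R).
lra.
Unshelve. all: by end_near. Qed.

Lemma Nlt (N : nat -> nat) K0 (Npos : forall mu, (0 < N mu)%N)
  (HK : forall mu, (K0 <= mu)%N -> (2 * N mu <= N mu.+1)%N) i j :
  (K0 <= i)%N -> (i < j)%N -> (N i < N j)%N.
Proof.
move=> Ki; elim: j => // j IH; rewrite ltnS leq_eqVlt => /orP[/eqP <-|ij].
  by have := HK i Ki; have := Npos i; move=> *; lia.
have := IH ij; have := HK j (leq_trans Ki (ltnW ij)); move=> *; lia.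
Qed.

Lemma Nge (N : nat -> nat) K0 (Npos : forall mu, (0 < N mu)%N)
  (HK : forall mu, (K0 <= mu)%N -> (2 * N mu <= N mu.+1)%N) j :
  (j <= N (K0 + j))%N.
Proof.
elim: j => // j IH; rewrite addnS; have := HK (K0 + j)%N (leq_addr _ _); have := Npos (K0 + j)%N; move=> *; lia.
Qed.

Lemma eps_anti (R : realType) N (eps_noninc : forall mu, eps R N mu.+1 <= eps R N mu)
  i j : (i <= j)%N -> eps R N j <= eps R N i.
Proof.
elim: j => [|j IH]; first by rewrite leqn0 => /eqP ->.
rewrite leq_eqVlt => /orP[/eqP ->//|]; rewrite ltnS => /IH.
exact: le_trans (eps_noninc j).
Qed.

Lemma in_sum_le (N : nat -> nat) (s : seq nat) k : k \in s -> (N k <= \sum_(i <- s) N i)%N.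
Proof.
elim: s => // x s IH; rewrite in_cons big_cons => /orP[/eqP ->|/IH]; lia.
Qed.

Lemma sqrt_ab (R : realType) (a b : R) : 0 < b -> 0 <= a ->
  Num.sqrt (a * b) = Num.sqrt (a / b) * b.
Proof.
move=> b0 a0; have -> : a * b = a / b * b ^+ 2 by field; rewrite gt_eqF.
rewrite sqrtrM; last exact: divr_ge0 a0 (ltW b0).
by rewrite (sqrtr_sqr b) gtr0_norm.
Qed.

Lemma mseqE (R : realType) N mu :
  (mseq_ R N mu)%:R = (Num.ceil (Num.sqrt (((N mu * N mu.+1)%N)%:R : R)))%:~R :> R.
Proof.
rewrite /mseq_ natr_absz ger0_norm // ceil_ge0.
exact: lt_le_trans (ltrN10 _) (sqrtr_ge0 _).
Qed.

Lemma part3 (R : realType) (N : nat -> nat)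
  (Npos : forall mu, (0 < N mu)%N)
  (ratio_oo : (fun mu => (N mu.+1)%:R / (N mu)%:R : R) @ \oo --> +oo) :
  (fun mu => Delta R N (N mu) (N mu)) @ \oo --> 0%E.
Proof.
apply: (@squeeze_cvge _ _ _ _ (fun=> 0%E) _ (fun mu => (eps R N mu)%:E)).
- near=> mu; rewrite Delta_ge0 /=.
  apply: (le_trans (Delta_le R N (N mu) (N mu) [:: mu] _)).
    by rewrite big_seq1 leqnn.
  by rewrite big_seq1.
- exact: cvg_cst.
- apply: cvg_EFin; first by near=> x.
  exact: eps_cvg0.
Unshelve. all: by end_near. Qed.

Lemma part4 (R : realType) (N : nat -> nat)
  (Npos : forall mu, (0 < N mu)%N)
  (ratio_oo : (fun mu => (N mu.+1)%:R / (N mu)%:R : R) @ \oo --> +oo) :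
  (fun mu => (mseq_ R N mu)%:R / (nseq_ N mu)%:R : R) @ \oo --> 0.
Proof.
have [K0 HK] := @ratio2 R N Npos ratio_oo.
apply/cvgr0Pnorm_le => e e0.
have he := (cvgr0Pnorm_le _).1 (@eps_cvg0 R N Npos ratio_oo) (e / 8) (divr_gt0 e0 (ltr0Sn _ 7)).
near=> mu.
have hmu : (K0 <= mu)%N by near: mu; exact: nbhs_infty_ge.
have hemu : `|eps R N mu| <= e / 8 by near: mu; exact: he.
rewrite ger0_norm ?eps_ge0 // in hemu.
have Ha : 1 <= (N mu)%:R :> R by rewrite ler1n.
have Hb : 2 * (N mu)%:R <= (N mu.+1)%:R :> R.
  by rewrite -[2]/(2%:R) -natrM ler_nat HK.
have Hb0 : 0 < (N mu.+1)%:R :> R by rewrite ltr0n.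
have Hx : Num.sqrt (((N mu * N mu.+1)%N)%:R : R) = 2 * eps R N mu * (N mu.+1)%:R.
  by rewrite natrM sqrt_ab // /eps; field.
have Hx1 : 1 <= Num.sqrt (((N mu * N mu.+1)%N)%:R : R).
  by rewrite -{1}sqrtr1 ler_sqrt // ler1n muln_gt0 !Npos.
have Hm := ceilB1_lt (Num.sqrt (((N mu * N mu.+1)%N)%:R : R)).
rewrite intrB -mseqE in Hm; rewrite -[1%:~R]/(1 : R) in Hm.
have Hm0 : 0 <= (mseq_ R N mu)%:R :> R by [].
have Hn : (nseq_ N mu)%:R = (N mu.+1)%:R - 1 :> R by rewrite /nseq_ natrB.
rewrite Hn ger0_norm; last first.
  by rewrite divr_ge0 // subr_ge0; lra.
rewrite ler_pdivrMr; last by lra.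
rewrite Hx in Hm Hx1.
have := eps_ge0 R N mu.
nra.
Unshelve. all: by end_near. Qed.

Lemma part5 (R : realType) (N : nat -> nat)
  (Npos : forall mu, (0 < N mu)%N)
  (ratio_oo : (fun mu => (N mu.+1)%:R / (N mu)%:R : R) @ \oo --> +oo)
  (eps_noninc : forall mu, eps R N mu.+1 <= eps R N mu) :
  ((2^-1 : R)%:E <= limn_einf (fun mu => Delta R N (nseq_ N mu) (mseq_ R N mu)))%E.
Proof.
have [K0 HK] := @ratio2 R N Npos ratio_oo.
set C := (\max_(k < K0) N k)%N.
rewrite limn_einf_lim; apply: lime_ge; first exact: is_cvg_einfs.
near=> M; apply/ereal_infP => _ [mu /= hmu <-].
have hM : (K0 + C <= M)%N by near: M; exact: nbhs_infty_ge.
have hmuK : (K0 + C <= mu)%N by exact: leq_trans hM hmu.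
have Kmu : (K0 <= mu)%N by apply: leq_trans hmuK; exact: leq_addr.
have lo : forall k, (k <= mu)%N -> (N k <= N mu)%N.
  move=> k kmu; have [kK|Kk] := ltnP k K0.
    apply: (leq_trans (leq_bigmax (F := fun i : 'I_K0 => N i) (Ordinal kK))).
    have := @Nge N K0 Npos HK (mu - K0); rewrite subnKC //.
    by apply: leq_trans; rewrite leq_subRL.
  move: kmu; rewrite leq_eqVlt => /orP[/eqP ->//|kmu].
  exact: ltnW (@Nlt N K0 Npos HK k mu Kk kmu).
have hi : forall k, (mu < k)%N -> (N mu.+1 <= N k)%N.
  move=> k; rewrite leq_eqVlt => /orP[/eqP <-//|kmu].
  exact: ltnW (@Nlt N K0 Npos HK mu.+1 k (leq_trans Kmu (leqnSn _)) kmu).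
apply: Delta_lb => s /andP[ms sn].
rewrite lee_fin.
have ins : forall k, k \in s -> (k <= mu)%N.
  move=> k ks; rewrite leqNgt; apply/negP => /hi.
  have := @in_sum_le N s k ks; rewrite /nseq_ in sn; have := Npos mu.+1.
  move=> *; lia.
set a := (N mu)%:R : R.
have a0 : 0 < a by rewrite ltr0n.
have step : \sum_(k <- s) (eps R N mu / a * (N k)%:R) <= \sum_(k <- s) eps R N k.
  rewrite big_seq [X in _ <= X]big_seq; apply: ler_sum => k ks.
  apply: (@le_trans _ _ (eps R N mu)); last exact: eps_anti (ins k ks).
  rewrite -mulrA ler_piMr ?eps_ge0 //.
  by rewrite mulrC ler_pdivrMr // mul1r ler_nat lo // ins.
apply: le_trans step.
rewrite -mulr_sumr -natr_sum.
set b := (N mu.+1)%:R : R.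
have b0 : 0 < b by rewrite ltr0n.
set q := Num.sqrt (a / b).
have q0 : 0 <= q by exact: sqrtr_ge0.
have Hq : q * q = a / b by rewrite -expr2 sqr_sqrtr // divr_ge0 // ltW.
have HS : q * b <= (\sum_(k <- s) N k)%:R.
  apply: (@le_trans _ _ (mseq_ R N mu)%:R); last by rewrite ler_nat.
  rewrite mseqE -(@sqrt_ab R a b b0 (ltW a0)) -natrM; exact: ceil_ge.
have -> : 2^-1 = eps R N mu / a * (q * b).
  rewrite /eps -/a -/b -/q.
  have -> : 2^-1 * q / a * (q * b) = 2^-1 * (q * q) * b / a by field; rewrite gt_eqF.
  by rewrite Hq; field; rewrite !gt_eqF // ltr0n.
apply: ler_wpM2l => //; rewrite divr_ge0 ?eps_ge0 // ltW.
Unshelve. all: by end_near. Qed.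

Theorem mainTheorem18 (R : realType) (N : nat -> nat)
  (Npos : forall mu, (0 < N mu)%N)
  (ratio_oo : (fun mu => (N mu.+1)%:R / (N mu)%:R : R) @ \oo --> +oo)
  (eps_noninc : forall mu, eps R N mu.+1 <= eps R N mu) :
  [/\ (forall n m, (Delta R N n.+1 m <= Delta R N n m)%E /\
                   (Delta R N n m <= Delta R N n m.+1)%E),
      (forall n1 n2 m1 m2,
          (Delta R N (n1 + n2) (m1 + m2) <= Delta R N n1 m1 + Delta R N n2 m2)%E),
      (fun mu => Delta R N (N mu) (N mu)) @ \oo --> 0%E,
      (fun mu => (mseq_ R N mu)%:R / (nseq_ N mu)%:R : R) @ \oo --> 0
    & ((2^-1 : R)%:E <= limn_einf (fun mu => Delta R N (nseq_ N mu) (mseq_ R N mu)))%E].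
Proof.
split.
- exact: Delta_mono.
- exact: Delta_subadd.
- exact: (@part3 R N Npos ratio_oo).
- exact: (@part4 R N Npos ratio_oo).
- exact: (@part5 R N Npos ratio_oo eps_noninc).
Qed.
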